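(* Let $n\le m$ and let $\alpha_1,\ldots,\alpha_n\in\mathbb{R}^m$ be linearly independent unit vectors; let $H_i=\{y\in\mathbb{R}^m:(y,\alpha_i)=0\}$ and consider the polyhedral cone $Q=\{y\in\mathbb{R}^m : (y,\alpha_i)\geqslant 0 \text{ for all } i=1,\ldots,n\}$ with walls $B_i=H_i\cap Q$. Let $\lambda_{min}$ be the minimal eigenvalue of the (positive definite) Gram matrix $\big((\alpha_i,\alpha_j)\big)_{i,j=1}^n$. Then the number of reflections of any billiard trajectory in $Q$ does not exceed $n!\left(\frac{4}{\lambda_{min}}\right)^{n-1}$.
   Context: A billiard trajectory in $Q$: a point particle moves with uniform (constant-velocity) motion in the interior of $Q$ and undergoes specular reflections at the walls $B_i$, i.e. upon hitting $B_i$ its velocity $v$ is replaced by $v-2(v,\alpha_i)\alpha_i$. If the trajectory reaches a corner $B_i\cap B_j$ with $i\neq j$, its further motion is not defined. $(\cdot,\cdot)$ denotes the Euclidean inner product. *)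

(* Defs.v *)
From HB Require Import structures.
From mathcomp Require Import all_boot all_order all_algebra.
From mathcomp Require Import reals.
Set Implicit Arguments. Unset Strict Implicit. Unset Printing Implicit Defensive.
Import Order.TTheory GRing.Theory Num.Theory.
Local Open Scope ring_scope.

Section Billiard.
Variables (R : realType) (m n : nat).

Definition dotv (u w : 'rV[R]_m) : R := \sum_(k < m) u 0 k * w 0 k.

Definition rows_mx (alpha : 'I_n -> 'rV[R]_m) : 'M[R]_(n, m) :=
  \matrix_(i < n, j < m) alpha i 0 j.

Definition gram (alpha : 'I_n -> 'rV[R]_m) : 'M[R]_n :=
  \matrix_(i < n, j < n) dotv (alpha i) (alpha j).

Definition in_interior (alpha : 'I_n -> 'rV[R]_m) (y : 'rV[R]_m) : Prop :=
  forall i, 0 < dotv y (alpha i).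

Definition reflect_at (alpha : 'I_n -> 'rV[R]_m) (i : 'I_n) (v : 'rV[R]_m) :=
  v - (2 * dotv v (alpha i)) *: alpha i.

(* A billiard trajectory in Q with (at least) N reflections:
   start x 0 in the interior of Q; on the j-th leg the particle moves
   uniformly with velocity v j, staying in the interior of Q, until it reaches
   x (j+1), a point of the wall B_(w j) not lying on any other wall
   (no corner), where the velocity is reflected. *)
Definition billiard_traj (alpha : 'I_n -> 'rV[R]_m) (N : nat)
    (x v : nat -> 'rV[R]_m) (w : nat -> 'I_n) : Prop :=
  in_interior alpha (x 0%N) /\
  forall j : nat, (j < N)%N ->
    [/\ exists2 t : R, 0 < t &
          x j.+1 = x j + t *: v j /\
          (forall s : R, 0 < s -> s < t -> in_interior alpha (x j + s *: v j)),
        dotv (x j.+1) (alpha (w j)) = 0,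
        (forall k : 'I_n, k != w j -> 0 < dotv (x j.+1) (alpha k)) &
        v j.+1 = reflect_at alpha (w j) (v j)].

End Billiard.

(* Main.v *)
Require Import Defs.
From HB Require Import structures.
From mathcomp Require Import all_boot all_order all_algebra.
From mathcomp Require Import classical_sets reals.
From mathcomp Require Import ring lra zify.
Set Implicit Arguments. Unset Strict Implicit. Unset Printing Implicit Defensive.
Import Order.TTheory GRing.Theory Num.Theory.
Local Open Scope ring_scope.

Section Basics.
Variable R : realType.

Lemma disc_le (a b c : R) : 0 <= a -> 0 <= c ->
  (forall r : R, 0 <= a + 2 * b * r + c * r ^+ 2) -> b ^+ 2 <= a * c.
Proof.
move=> ha hc H.
have [c0|cpos] := eqVneq c 0.
  have [b0|bn0] := eqVneq b 0; first by rewrite b0 c0; nra.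
  have := H (- (a + 1) / (2 * b)); rewrite c0.
  have -> : a + 2 * b * (- (a + 1) / (2 * b)) + 0 * (- (a + 1) / (2 * b)) ^+ 2 = -1.
    by field; rewrite ?mulf_neq0 // pnatr_eq0.
  by move=> h; lra.
have cp : 0 < c by rewrite lt_def cpos hc.
have := H (- b / c).
have -> : a + 2 * b * (- b / c) + c * (- b / c) ^+ 2 = (a * c - b ^+ 2) / c by field.
by rewrite pmulr_lge0 ?invr_gt0 // subr_ge0.
Qed.

Variable m : nat.
Implicit Types u w : 'rV[R]_m.

Lemma dotvE u w : dotv u w = (u *m w^T) 0 0.
Proof. by rewrite /dotv !mxE; apply: eq_bigr => k _; rewrite mxE. Qed.

Lemma dotvC u w : dotv u w = dotv w u.
Proof. by rewrite /dotv; apply: eq_bigr => k _; rewrite mulrC. Qed.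

Lemma dotvDl u u' w : dotv (u + u') w = dotv u w + dotv u' w.
Proof. by rewrite /dotv -big_split; apply: eq_bigr => k _; rewrite mxE mulrDl. Qed.

Lemma dotvDr u w w' : dotv u (w + w') = dotv u w + dotv u w'.
Proof. by rewrite dotvC dotvDl !(dotvC _ u). Qed.

Lemma dotvZl a u w : dotv (a *: u) w = a * dotv u w.
Proof. by rewrite /dotv mulr_sumr; apply: eq_bigr => k _; rewrite mxE mulrA. Qed.

Lemma dotvZr a u w : dotv u (a *: w) = a * dotv u w.
Proof. by rewrite dotvC dotvZl dotvC. Qed.

Lemma dotvNl u w : dotv (- u) w = - dotv u w.
Proof. by rewrite -scaleN1r dotvZl mulN1r. Qed.

Lemma dotvNr u w : dotv u (- w) = - dotv u w.
Proof. by rewrite dotvC dotvNl dotvC. Qed.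

Lemma dotvBl u u' w : dotv (u - u') w = dotv u w - dotv u' w.
Proof. by rewrite dotvDl dotvNl. Qed.

Lemma dotvBr u w w' : dotv u (w - w') = dotv u w - dotv u w'.
Proof. by rewrite dotvDr dotvNr. Qed.

Lemma dotv0l w : dotv 0 w = 0.
Proof. by rewrite /dotv big1 // => k _; rewrite mxE mul0r. Qed.

Lemma dotv0r w : dotv w 0 = 0.
Proof. by rewrite dotvC dotv0l. Qed.

Lemma dotv_suml (I : Type) (r : seq I) (P : pred I) (F : I -> 'rV[R]_m) w :
  dotv (\sum_(i <- r | P i) F i) w = \sum_(i <- r | P i) dotv (F i) w.
Proof.
exact: (big_morph (fun u => dotv u w) (fun a b => dotvDl a b w) (dotv0l w)).
Qed.

Lemma dotvv_ge0 u : 0 <= dotv u u.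
Proof. by rewrite /dotv sumr_ge0 // => k _; rewrite -expr2 sqr_ge0. Qed.

Lemma dotvv_eq0 u : (dotv u u == 0) = (u == 0).
Proof.
apply/idP/idP; last by move/eqP->; rewrite dotv0l.
rewrite /dotv psumr_eq0; last by move=> k _; rewrite -expr2 sqr_ge0.
move=> /allP H; apply/eqP/rowP => k; rewrite mxE.
by have := H k (mem_index_enum k); rewrite /= -expr2 sqrf_eq0 => /eqP.
Qed.

Lemma cauchy_schwarz u w : dotv u w ^+ 2 <= dotv u u * dotv w w.
Proof.
apply: disc_le; rewrite ?dotvv_ge0 // => r.
have := dotvv_ge0 (u + r *: w).
rewrite !(dotvDl, dotvDr, dotvZl, dotvZr) (dotvC w u).
by move=> H; nra.
Qed.

End Basics.
Section Mx.
Variable R : realType.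

Lemma dotv_mulr p q (u : 'rV[R]_p) (x : 'rV[R]_q) (M : 'M[R]_(q, p)) :
  dotv u (x *m M) = dotv (u *m M^T) x.
Proof. by rewrite !dotvE trmx_mul mulmxA. Qed.

Lemma dotv_mull p q (u : 'rV[R]_p) (x : 'rV[R]_q) (M : 'M[R]_(q, p)) :
  dotv (x *m M) u = dotv x (u *m M^T).
Proof. by rewrite dotvC dotv_mulr dotvC. Qed.

Definition mxC p q (M : 'M[R]_(p, q)) : R := \sum_(j < q) dotv (row j M^T) (row j M^T).

Lemma mxC_ge0 p q (M : 'M[R]_(p, q)) : 0 <= mxC M.
Proof. by apply: sumr_ge0 => j _; apply: dotvv_ge0. Qed.

Lemma mxC_bound p q (y : 'rV[R]_p) (M : 'M[R]_(p, q)) :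
  dotv (y *m M) (y *m M) <= mxC M * dotv y y.
Proof.
rewrite /mxC mulr_suml {1}/dotv; apply: ler_sum => j _.
have -> : (y *m M) 0 j = dotv y (row j M^T).
  by rewrite !mxE; apply: eq_bigr => i _; rewrite !mxE.
by rewrite -expr2 mulrC; apply: cauchy_schwarz.
Qed.

Lemma psd_cs n (M : 'M[R]_n) (x y : 'rV[R]_n) : M^T = M ->
  (forall z, 0 <= dotv (z *m M) z) ->
  dotv (x *m M) y ^+ 2 <= dotv (x *m M) x * dotv (y *m M) y.
Proof.
move=> sM psd; apply: disc_le; rewrite ?psd // => r.
have := psd (x + r *: y).
rewrite mulmxDl -scalemxAl !(dotvDl, dotvDr, dotvZl, dotvZr).
have -> : dotv (y *m M) x = dotv (x *m M) y by rewrite dotv_mull sM dotvC.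
by move=> H; nra.
Qed.

Lemma rayleigh n (G : 'M[R]_n.+1) : G^T = G ->
  exists mu, eigenvalue G mu /\ forall b, mu * dotv b b <= dotv (b *m G) b.
Proof.
move=> sG.
pose E := fun r : R => exists2 b : 'rV[R]_n.+1, b != 0 & r = dotv (b *m G) b / dotv b b.
have CG := mxC_ge0 G.
have lbE : forall r, E r -> - (mxC G + 1) <= r.
  move=> r [b b0 ->].
  have bp : 0 < dotv b b by rewrite lt_def dotvv_eq0 b0 dotvv_ge0.
  have h1 := cauchy_schwarz (b *m G) b.
  have h2 := mxC_bound b G.
  set q := dotv (b *m G) b in h1 *; set d := dotv b b in h1 h2 bp *.
  set e := dotv (b *m G) (b *m G) in h1 h2.
  rewrite ler_pdivlMr // -subr_ge0.
  have: q ^+ 2 <= mxC G * d ^+ 2 by rewrite expr2 mulrA; nra.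
  move=> h3.
  have h4 : mxC G * d ^+ 2 < (mxC G + 1) ^+ 2 * d ^+ 2.
    rewrite ltr_pM2r ?exprn_gt0 //; nra.
  rewrite mulNr opprK.
  case: (lerP 0 (q + (mxC G + 1) * d)) => // h5.
  have h6 : ((mxC G + 1) * d) ^+ 2 < q ^+ 2.
    have hX : 0 < (mxC G + 1) * d by rewrite mulr_gt0 //; lra.
    have hY : (mxC G + 1) * d < - q by lra.
    set X := (mxC G + 1) * d in hX hY *.
    rewrite -sqrrN; nra.
  rewrite exprMn in h6.
  by have := lt_trans (lt_le_trans h6 h3) h4; rewrite ltxx.
have hasE : has_inf E.
  split; last by exists (- (mxC G + 1)) => r /lbE.
  pose b1 : 'rV[R]_n.+1 := const_mx 1.
  exists (dotv (b1 *m G) b1 / dotv b1 b1).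
  exists b1 => //; apply/eqP => /rowP /(_ ord0); rewrite !mxE.
  by move/eqP; rewrite oner_eq0.
pose mu := inf E.
have mule : forall b, mu * dotv b b <= dotv (b *m G) b.
  move=> b; have [->|b0] := eqVneq b 0; first by rewrite mul0mx !dotv0l mulr0.
  have bp : 0 < dotv b b by rewrite lt_def dotvv_eq0 b0 dotvv_ge0.
  rewrite -ler_pdivlMr //; apply: ge_inf; first by case: hasE.
  by exists b.
exists mu; split => //.
pose M := G - mu%:M.
have sM : M^T = M by rewrite /M linearB /= sG tr_scalar_mx.
have Mpsd : forall z, 0 <= dotv (z *m M) z.
  move=> z; rewrite /M mulmxBr mul_mx_scalar dotvBl dotvZl subr_ge0; exact: mule.
apply: contraT; rewrite /eigenvalue /eigenspace negbK kermx_eq0 row_free_unit.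
rewrite -/M => Mu.
pose N := invmx M.
have CM := mxC_ge0 M; have CN := mxC_ge0 N.
pose K := mxC N ^+ 2 * mxC M.
have K0 : 0 <= K by rewrite /K mulr_ge0 // sqr_ge0.
have key : forall x, dotv x x ^+ 2 <= K * dotv (x *m M) x ^+ 2.
  move=> x.
  set q := dotv (x *m M) x; set y := x *m M.
  set s := dotv y y.
  have q0 : 0 <= q by apply: Mpsd.
  have hx : dotv x x <= mxC N * s.
    have {1 2}-> : x = y *m N by rewrite /y /N mulmxK.
    exact: mxC_bound.
  have hs : s ^+ 2 <= mxC M * q ^+ 2.
    have h1 : s ^+ 2 <= q * dotv (y *m M) y.
      have := psd_cs x y sM Mpsd; rewrite -/q.
      by have -> : dotv (x *m M) y = s by [].
    have h2 : dotv (y *m M) y ^+ 2 <= mxC M * s ^+ 2.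
      have := cauchy_schwarz (y *m M) y; have := mxC_bound y M.
      rewrite -/s => h3 h4.
      have := dotvv_ge0 y; rewrite -/s => h5.
      have := dotvv_ge0 (y *m M) => h6. nra.
    have s0 : 0 <= s by apply: dotvv_ge0.
    have h7 : 0 <= dotv (y *m M) y by apply: Mpsd.
    have [->|sp] := eqVneq s 0; first by rewrite expr0n /= mulr_ge0 // sqr_ge0.
    have spos : 0 < s by rewrite lt_def sp s0.
    set b := dotv (y *m M) y in h1 h2 h7.
    have h8 : (s ^+ 2) ^+ 2 <= (q * b) ^+ 2.
      by rewrite ler_sqr ?nnegrE ?exprn_ge0 ?mulr_ge0.
    have h9 : (s ^+ 2) ^+ 2 <= q ^+ 2 * (mxC M * s ^+ 2).
      apply: (le_trans h8); rewrite exprMn; exact: (ler_wpM2l (sqr_ge0 q) h2).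
    have s2p : 0 < s ^+ 2 by rewrite exprn_gt0.
    rewrite -(ler_pM2r s2p) -expr2; apply: (le_trans h9); rewrite mulrA [q ^+ 2 * _]mulrC.
    by rewrite mulrA.
  have d0 := dotvv_ge0 x.
  have s0 : 0 <= s by apply: dotvv_ge0.
  rewrite /K; nra.
have ep : 0 < (K + 1)^-1 by rewrite invr_gt0; lra.
have [r [x x0 ->] hr] := inf_adherent ep hasE.
have xp : 0 < dotv x x by rewrite lt_def dotvv_eq0 x0 dotvv_ge0.
have := key x.
have -> : dotv (x *m M) x = dotv (x *m G) x - mu * dotv x x.
  by rewrite /M mulmxBr mul_mx_scalar dotvBl dotvZl.
move: hr; rewrite -/mu ltr_pdivrMr // => hr.
set q := dotv (x *m G) x in hr *; set d := dotv x x in hr xp *.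
have q0 : 0 <= q - mu * d by have := mule x; rewrite -/q -/d; lra.
have hq : q - mu * d < (K + 1)^-1 * d by nra.
have hK : K * ((K + 1)^-1) ^+ 2 < 1.
  have K1 : 0 < (K + 1) ^+ 2 by rewrite exprn_gt0 //; lra.
  rewrite exprVn ltr_pdivrMr // mul1r; nra.
move=> h.
have : K * (q - mu * d) ^+ 2 <= K * ((K + 1)^-1 * d) ^+ 2.
  apply: ler_wpM2l => //; rewrite ler_sqr ?nnegrE //; first by lra.
  by apply: mulr_ge0; lra.
move=> h2.
have h3 : K * ((K + 1)^-1 * d) ^+ 2 < d ^+ 2.
  by rewrite exprMn mulrA gtr_pMl // exprn_gt0.
by have := le_lt_trans h (le_lt_trans h2 h3); rewrite ltxx.
Qed.

End Mx.
Section Step.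
Variables (R : realType) (m k : nat) (alpha : 'I_k -> 'rV[R]_m) (lam : R).
Hypothesis lam0 : 0 < lam.
Hypothesis hunit : forall i, dotv (alpha i) (alpha i) = 1.
Local Notation A := (rows_mx alpha).
Hypothesis hlam : forall b : 'rV[R]_k, lam * dotv b b <= dotv (b *m A) (b *m A).
Variables (L : nat) (v : nat -> 'rV[R]_m) (w : nat -> 'I_k).
Hypothesis hseq : forall j, (j < L)%N ->
  dotv (v j) (alpha (w j)) < 0 /\ v j.+1 = reflect_at alpha (w j) (v j).

Lemma rowA i : row i A = alpha i.
Proof. by apply/rowP => j; rewrite !mxE. Qed.

Lemma deltaA i : delta_mx 0 i *m A = alpha i.
Proof. by rewrite -rowE rowA. Qed.

Lemma cE (u : 'rV[R]_m) i : (u *m A^T) 0 i = dotv u (alpha i).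
Proof. by rewrite /dotv !mxE; apply: eq_bigr => j _; rewrite !mxE. Qed.

Definition t l := - 2 * dotv (v l) (alpha (w l)).

Lemma t_gt0 l : (l < L)%N -> 0 < t l.
Proof. by move=> /hseq [h _]; rewrite /t; lra. Qed.

Lemma vS l : (l < L)%N -> v l.+1 = v l + t l *: alpha (w l).
Proof.
move=> /hseq [_ ->]; rewrite /reflect_at /t.
by rewrite -scaleNr mulNr.
Qed.

Lemma dotv_unit_le1 i j : `|dotv (alpha i) (alpha j)| <= 1.
Proof.
have := cauchy_schwarz (alpha i) (alpha j); rewrite !hunit mulr1.
by rewrite -real_normK ?num_real // => h; rewrite -(expr_le1 (n:=2)) //.
Qed.

Lemma norm_inv l : (l < L)%N -> dotv (v l.+1) (v l.+1) = dotv (v l) (v l).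
Proof.
move=> hl; rewrite vS // !(dotvDl, dotvDr, dotvZl, dotvZr) hunit.
rewrite (dotvC (alpha _)) /t; ring.
Qed.

Lemma norm_inv_all l : (l <= L)%N -> dotv (v l) (v l) = dotv (v 0) (v 0).
Proof.
elim: l => // l IH hl; rewrite norm_inv ?IH //; exact: ltnW.
Qed.

Definition B a b : 'rV[R]_k := \sum_(a <= r < b) t r *: delta_mx 0 (w r).

Lemma v_shift a d : (a + d <= L)%N -> v (a + d) = v a + B a (a + d) *m A.
Proof.
elim: d => [|d IH] h; first by rewrite addn0 /B big_geq // mul0mx addr0.
rewrite addnS vS; last by rewrite -addnS.
rewrite IH; last by apply: ltnW; rewrite -addnS.
rewrite /B big_nat_recr /=; last exact: leq_addr.
by rewrite mulmxDl -scalemxAl deltaA addrA.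
Qed.

Lemma B_A_dot a b (u : 'rV[R]_m) :
  dotv (B a b *m A) u = \sum_(a <= r < b) t r * dotv (alpha (w r)) u.
Proof.
rewrite /B mulmx_suml dotv_suml; apply: eq_bigr => r _.
by rewrite -scalemxAl deltaA dotvZl.
Qed.

Lemma B_ones a b : dotv (B a b) (const_mx 1) = \sum_(a <= r < b) t r.
Proof.
rewrite /B dotv_suml; apply: eq_bigr => r _.
rewrite dotvZl /dotv (bigD1 (w r)) //= big1 ?addr0.
  by rewrite !mxE !eqxx mulr1 mulr1.
by move=> i /negbTE hi; rewrite !mxE hi andbF mul0r.
Qed.


Local Notation G := (A *m A^T).

Lemma dotv_G (b : 'rV[R]_k) : dotv (b *m G) b = dotv (b *m A) (b *m A).
Proof. by rewrite mulmxA dotv_mull trmxK. Qed.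

Lemma G_unit : G \in unitmx.
Proof.
rewrite -row_free_unit; apply: inj_row_free => b hb.
have := hlam b; rewrite -dotv_G hb dotv0l => h.
apply/eqP; rewrite -dotvv_eq0 eq_le dotvv_ge0 andbT.
by rewrite -(pmulr_rle0 _ lam0).
Qed.

Definition PM : 'M[R]_m := A^T *m invmx G *m A.
Definition P (u : 'rV[R]_m) := u *m PM.

Lemma PA (u : 'rV[R]_m) : P u *m A^T = u *m A^T.
Proof.
by rewrite /P /PM !mulmxA -(mulmxA _ A) mulmxKV // G_unit.
Qed.

Lemma P_dot (u : 'rV[R]_m) i : dotv (P u) (alpha i) = dotv u (alpha i).
Proof. by rewrite -!cE PA. Qed.

Lemma P_alpha i : P (alpha i) = alpha i.
Proof.
rewrite -deltaA /P /PM !mulmxA -(mulmxA _ A) mulmxK ?G_unit //.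
Qed.

Lemma P_lin (u u' : 'rV[R]_m) (c : R) : P (u + c *: u') = P u + c *: P u'.
Proof. by rewrite /P mulmxDl scalemxAl. Qed.

Definition p2 := dotv (P (v 0)) (P (v 0)).

Lemma p2_ge0 : 0 <= p2.
Proof. exact: dotvv_ge0. Qed.

Lemma p2_inv l : (l <= L)%N -> dotv (P (v l)) (P (v l)) = p2.
Proof.
elim: l => // l IH hl; rewrite -IH; last exact: ltnW.
rewrite vS // P_lin P_alpha !(dotvDl, dotvDr, dotvZl, dotvZr) hunit.
rewrite (dotvC (alpha _)) P_dot /t; ring.
Qed.

Lemma B_bound a d : (a + d <= L)%N -> lam * dotv (B a (a + d)) (B a (a + d)) <= 4 * p2.
Proof.
move=> h; apply: (le_trans (hlam _)).
set D := B a (a + d) *m A.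
have ha : (a <= L)%N by apply: leq_trans h; apply: leq_addr.
have e1 : dotv (v a + D) (v a + D) = dotv (v a) (v a).
  by rewrite -v_shift // norm_inv_all // norm_inv_all.
have e2 : dotv (v a) D = dotv (P (v a)) D.
  by rewrite /D !dotv_mulr PA.
move: e1; rewrite !(dotvDl, dotvDr) (dotvC D (v a)) e2 => e1.
have e3 : dotv D D = - 2 * dotv (P (v a)) D by lra.
have cs := cauchy_schwarz (P (v a)) D.
rewrite p2_inv // in cs.
have D0 := dotvv_ge0 D; have P0 := p2_ge0.
have [Dz|Dp] := eqVneq (dotv D D) 0; first by rewrite Dz; lra.
have Dpos : 0 < dotv D D by rewrite lt_def Dp D0.
have : dotv D D * dotv D D <= 4 * p2 * dotv D D.
  by rewrite {1}e3 -mulrA (mulrC p2) mulrA; nra.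
by rewrite ler_pM2r.
Qed.

Lemma ones_dot : dotv (const_mx 1 : 'rV[R]_k) (const_mx 1) = k%:R.
Proof.
rewrite /dotv (eq_bigr (fun _ => 1)) ?sumr_const ?card_ord //.
by move=> i _; rewrite !mxE mulr1.
Qed.

Lemma sum_t_bound a d : (a + d <= L)%N ->
  lam * (\sum_(a <= r < a + d) t r) ^+ 2 <= 4 * k%:R * p2.
Proof.
move=> h; rewrite -B_ones.
have := cauchy_schwarz (B a (a + d)) (const_mx 1); rewrite ones_dot => cs.
have := B_bound h => hb.
have k0 : 0 <= k%:R :> R by apply: ler0n.
apply: le_trans (ler_wpM2l (ltW lam0) cs) _.
rewrite mulrA mulrAC; rewrite (mulrC 4) -mulrA.
by rewrite mulrCA -mulrA; apply: ler_wpM2l.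
Qed.

Lemma c_bound l : (l <= L)%N ->
  lam * p2 <= \sum_i dotv (v l) (alpha i) ^+ 2.
Proof.
move=> hl.
set c := v l *m A^T.
have ec : \sum_i dotv (v l) (alpha i) ^+ 2 = dotv c c.
  by rewrite /dotv; apply: eq_bigr => i _; rewrite cE expr2.
rewrite ec.
set g := c *m invmx G.
have ePv : P (v l) = g *m A by rewrite /g /c /P /PM !mulmxA.
have e1 : p2 = dotv c g.
  by rewrite -(p2_inv hl) {2}ePv dotv_mulr PA.
have e2 : lam * dotv g g <= p2 by rewrite -(p2_inv hl) ePv; apply: hlam.
have cs := cauchy_schwarz c g.
rewrite -e1 in cs.
have P0 := p2_ge0; have g0 := dotvv_ge0 g; have c0 := dotvv_ge0 c.
have [pz|pp] := eqVneq p2 0; first by rewrite pz mulr0.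
have ppos : 0 < p2 by rewrite lt_def pp P0.
have : lam * p2 * p2 <= dotv c c * p2.
  have : lam * p2 ^+ 2 <= dotv c c * (lam * dotv g g).
    by rewrite [X in _ <= X]mulrCA; apply: ler_wpM2l => //; exact: ltW.
  move=> h; apply: (le_trans _ (le_trans h _)); first by rewrite expr2 mulrA.
  by apply: ler_wpM2l.
by rewrite ler_pM2r.
Qed.


Lemma sum_t_ge0 a b : (b <= L)%N -> 0 <= \sum_(a <= r < b) t r.
Proof.
move=> hb; rewrite big_nat_cond; apply: sumr_ge0 => r /andP [/andP [_ hr] _].
by apply: ltW; apply: t_gt0; apply: leq_trans hb.
Qed.

Lemma entry_bound a b i : (a <= b)%N -> (b < L)%N ->
  (exists2 l, (a <= l <= b)%N & w l = i) ->
  `|dotv (v b) (alpha i)| <= \sum_(a <= r < b) t r + t b / 2.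
Proof.
move=> hab hbL [l /andP [hal hlb] <-].
have T0 : 0 <= \sum_(a <= r < b) t r by apply: sum_t_ge0; apply: ltnW.
have tb := t_gt0 hbL.
move: hlb; rewrite leq_eqVlt => /orP [/eqP ->|hlb].
  have -> : dotv (v b) (alpha (w b)) = - (t b / 2) by rewrite /t; field.
  rewrite normrN gtr0_norm; [lra | apply: divr_gt0 => //; lra].
have hlL : (l < L)%N by apply: ltn_trans hbL.
have e1 : v b = v l.+1 + B l.+1 b *m A.
  by rewrite -{1}(subnKC hlb) v_shift ?subnKC //; apply: ltnW.
have e2 : dotv (v l.+1) (alpha (w l)) = t l / 2.
  by rewrite vS // dotvDl dotvZl hunit /t; field.
rewrite e1 dotvDl e2 B_A_dot.
have tl := t_gt0 hlL.
have h1 : `|\sum_(l.+1 <= r < b) t r * dotv (alpha (w r)) (alpha (w l))|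
    <= \sum_(l.+1 <= r < b) t r.
  apply: (le_trans (ler_norm_sum _ _ _)).
  rewrite big_nat_cond [X in _ <= X]big_nat_cond; apply: ler_sum => r /andP [/andP [_ hr] _].
  have trp : 0 < t r by apply: t_gt0; apply: ltn_trans hbL.
  rewrite normrM gtr0_norm //; rewrite ger_pMr //; exact: dotv_unit_le1.
have e3 : \sum_(a <= r < b) t r = \sum_(a <= r < l) t r + (t l + \sum_(l.+1 <= r < b) t r).
  by rewrite (big_cat_nat hal) ?(ltnW hlb) //= (big_ltn hlb).
have h0 : 0 <= \sum_(a <= r < l) t r by apply: sum_t_ge0; apply: ltnW.
apply: (le_trans (ler_normD _ _)).
rewrite e3 gtr0_norm; last by apply: divr_gt0 => //; lra.
have tb2 : 0 < t b / 2 by apply: divr_gt0 => //; lra.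
lra.
Qed.

Lemma window a b : (a <= b)%N -> (b < L)%N ->
  (forall i, exists2 l, (a <= l <= b)%N & w l = i) ->
  lam * p2 <= k%:R * (\sum_(a <= r < b) t r + t b / 2) ^+ 2.
Proof.
move=> hab hbL hall.
apply: (le_trans (c_bound (ltnW hbL))).
set M := \sum_(a <= r < b) t r + t b / 2.
have -> : k%:R * M ^+ 2 = \sum_(i < k) M ^+ 2 by rewrite sumr_const card_ord mulr_natl.
apply: ler_sum => i _.
rewrite -real_normK ?num_real // ler_sqr ?nnegrE ?normr_ge0 //.
  exact: entry_bound.
have T0 : 0 <= \sum_(a <= r < b) t r by apply: sum_t_ge0; apply: ltnW.
have tb := t_gt0 hbL.
have : 0 < t b / 2 by apply: divr_gt0 => //; lra.
rewrite /M; lra.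
Qed.


Lemma delta_dot i : dotv (delta_mx 0 i : 'rV[R]_k) (delta_mx 0 i) = 1.
Proof.
rewrite /dotv (bigD1 i) //= big1 ?addr0; first by rewrite !mxE !eqxx mulr1.
by move=> j /negbTE hj; rewrite !mxE hj andbF mul0r.
Qed.

Lemma lam_le1 : (0 < k)%N -> lam <= 1.
Proof.
move=> k0; have := hlam (delta_mx 0 (Ordinal k0)).
by rewrite deltaA hunit delta_dot mulr1.
Qed.

Hypothesis k1 : (1 < k)%N.
Variable F : R.
Hypothesis F0 : 0 <= F.
Hypothesis hsub : forall a l, (a + l <= L)%N ->
  (exists i0, forall r, (a <= r < a + l)%N -> w r != i0) -> l%:R <= F.

Definition sq := Num.sqrt (lam * p2 / k%:R).

Definition Phi a e := \sum_(a <= r < e) t r + 1 / 2 * \sum_(a.+1 <= r < e) t r.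

Definition seen a e i := has (fun r => w r == i) (index_iota a e).

Lemma sq_ge0 : 0 <= sq. Proof. exact: sqrtr_ge0. Qed.

Lemma sq2 : sq ^+ 2 = lam * p2 / k%:R.
Proof.
rewrite sqr_sqrtr // divr_ge0 // ?ler0n // mulr_ge0 //; [exact: ltW | exact: p2_ge0].
Qed.

Lemma Phi_ge0 a e : (e <= L)%N -> 0 <= Phi a e.
Proof.
move=> he; rewrite /Phi addr_ge0 ?sum_t_ge0 // mulr_ge0 ?sum_t_ge0 //.
by rewrite divr_ge0 ?ler01 ?ler0n.
Qed.

Lemma sq_window a b : (a <= b)%N -> (b < L)%N ->
  (forall i, exists2 l, (a <= l <= b)%N & w l = i) ->
  sq <= \sum_(a <= r < b) t r + t b / 2.
Proof.
move=> hab hbL hall.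
have := window hab hbL hall => hw.
have k0 : 0 < k%:R :> R by rewrite ltr0n; apply: ltn_trans k1.
have T0 : 0 <= \sum_(a <= r < b) t r by apply: sum_t_ge0; apply: ltnW.
have tb := t_gt0 hbL.
set M := \sum_(a <= r < b) t r + t b / 2 in hw *.
have tb2 : 0 < t b / 2 by apply: divr_gt0 => //; lra.
have M0 : 0 <= M by rewrite /M; lra.
rewrite -(ler_sqr (sq_ge0) M0) sq2 ler_pdivrMr // mulrC.
by rewrite (mulrC p2) (mulrC _ k%:R).
Qed.

Lemma potential l : forall a, (a + l <= L)%N -> sq * l%:R <= F * (sq + Phi a (a + l)).
Proof.
elim/ltn_ind: l => l IH a hal.
have s0 := sq_ge0.
have Phi0 : 0 <= Phi a (a + l) by apply: Phi_ge0.
have easy : l%:R <= F -> sq * l%:R <= F * (sq + Phi a (a + l)).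
  move=> hl; apply: (le_trans (ler_wpM2l s0 hl)); rewrite mulrC.
  by apply: ler_wpM2l => //; rewrite lerDl.
have [full|] := boolP [forall i, seen a (a + l) i]; last first.
  rewrite negb_forall => /existsP [i0 hi0]; apply: easy; apply: (hsub hal).
  exists i0 => r hr; apply: contra hi0 => /eqP hr0; apply/hasP.
  by exists r; [rewrite mem_index_iota | rewrite hr0].
have k0 : (0 < k)%N by apply: ltn_trans k1.
pose Pb b := [forall i, seen a (a + b.+1) i].
have l0 : (0 < l)%N.
  move: full; case: (l) => // /forallP /(_ (Ordinal k0)).
  by rewrite /seen addn0 /index_iota subnn.
have exPb : exists b, Pb b by exists l.-1; rewrite /Pb prednK.
case: (ex_minnP exPb) => b0 Pb0 minb0.
have b0pos : (0 < b0)%N.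
  case: b0 Pb0 minb0 => // /forallP Pb0 _; exfalso.
  have := Pb0 (Ordinal k0); have := Pb0 (Ordinal k1).
  rewrite /seen addn1 /index_iota subSnn /= !orbF => /eqP h1 /eqP h2.
  by move: h1; rewrite h2 => /(congr1 val).
have b0l : (b0 < l)%N.
  have : Pb l.-1 by rewrite /Pb prednK.
  by move=> /minb0; rewrite -ltnS prednK.
have notfull : ~~ [forall i, seen a (a + b0) i].
  apply/negP => hf; have := minb0 b0.-1; rewrite /Pb prednK // => /(_ hf).
  by rewrite -ltnS prednK // ltnn.
have hb0F : b0%:R <= F.
  apply: (hsub (a := a)).
    by apply: leq_trans hal; rewrite leq_add2l ltnW.
  move: notfull; rewrite negb_forall => /existsP [i0 hi0].
  exists i0 => r hr; apply: contra hi0 => /eqP hr0; apply/hasP.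
  by exists r; [rewrite mem_index_iota | rewrite hr0].
set b := (a + b0)%N.
have hbL : (b < L)%N by apply: leq_trans hal; rewrite /b ltn_add2l.
have hsw : sq <= \sum_(a <= r < b) t r + t b / 2.
  apply: sq_window => //; first exact: leq_addr.
  move=> i; move: Pb0 => /forallP /(_ i) /hasP [r].
  rewrite mem_index_iota addnS ltnS => hr /eqP <-; by exists r.
have hlt : (l - b0 < l)%N by rewrite ltn_subrL b0pos l0.
have hIH := IH _ hlt b.
have ebl : (b + (l - b0) = a + l)%N by rewrite /b -addnA subnKC // ltnW.
rewrite ebl in hIH; have {hIH} hIH := hIH hal.
have el : l%:R = b0%:R + (l - b0)%:R :> R by rewrite -natrD subnKC // ltnW.
have hab : (a <= b)%N by apply: leq_addr.
have hbe : (b <= a + l)%N by rewrite /b leq_add2l ltnW.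
have hbe' : (b < a + l)%N by rewrite /b ltn_add2l.
have ha1b : (a.+1 <= b)%N by rewrite /b -addn1 leq_add2l.
have ePhi : Phi a (a + l) = \sum_(a <= r < b) t r + 1 / 2 * \sum_(a.+1 <= r < b) t r
    + 1 / 2 * t b + Phi b (a + l).
  rewrite /Phi (big_cat_nat hab hbe) (big_cat_nat ha1b hbe) /= (big_ltn hbe').
  ring.
have U0 : 0 <= \sum_(a.+1 <= r < b) t r by apply: sum_t_ge0; apply: ltnW.
have : sq + Phi b (a + l) <= Phi a (a + l) by rewrite ePhi; lra.
move=> hP.
rewrite el mulrDr.
apply: (le_trans (lerD (ler_wpM2l s0 hb0F) hIH)).
rewrite (mulrC sq F) -mulrDr; apply: ler_wpM2l => //; lra.
Qed.


Lemma step_bound : (L%:R : R) <= F * (4 * k%:R / lam).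
Proof.
have k0 : (0 < k)%N by apply: ltn_trans k1.
have kR : 1 <= k%:R :> R by rewrite ler1n.
have l1 := lam_le1 k0.
have lk : 1 <= k%:R / lam by rewrite ler_pdivlMr // mul1r; lra.
have [L0|LL] := eqVneq L 0%N.
  rewrite L0 mulr_ge0 // divr_ge0 //; last exact: ltW.
  by apply: mulr_ge0; [lra | exact: ler0n].
have Lpos : (0 < L)%N by rewrite lt0n.
have p2pos : 0 < p2.
  rewrite lt_def p2_ge0 andbT; apply/eqP => pz.
  have := @B_bound 0 1 Lpos.
  rewrite pz mulr0 add0n => hB.
  have : dotv (B 0 1) (B 0 1) == 0.
    by rewrite eq_le dotvv_ge0 andbT -(pmulr_rle0 _ lam0).
  rewrite dotvv_eq0 => /eqP hB0.
  have := B_ones 0 1; rewrite hB0 dotv0l big_nat1 => h0.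
  by have := t_gt0 Lpos; rewrite -h0 ltxx.
have kpos : 0 < k%:R :> R by rewrite ltr0n.
have sqpos : 0 < sq by rewrite sqrtr_gt0 divr_gt0 // mulr_gt0.
have hS := sum_t_bound (a := 0) (d := L) (leqnn _).
rewrite add0n in hS.
set S := \sum_(0 <= r < L) t r in hS.
have S0 : 0 <= S by apply: sum_t_ge0.
have hS2 : S <= 2 * k%:R * sq / lam.
  have X0 : 0 <= 2 * k%:R * sq / lam.
    by rewrite divr_ge0 ?mulr_ge0 ?ler0n //; [lra|exact: ltW].
  rewrite -(ler_sqr (S0) X0) !exprMn sq2 exprVn.
  rewrite ler_pdivlMr ?exprn_gt0 //.
  have -> : 2 ^+ 2 * k%:R ^+ 2 * (lam * p2 / k%:R) = lam * (4 * k%:R * p2).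
    by field; rewrite pnatr_eq0 -lt0n.
  have -> : S ^+ 2 * lam ^+ 2 = lam * (lam * S ^+ 2) by ring.
  by apply: ler_wpM2l => //; exact: ltW.
have hP := potential (a := 0) (l := L) (leqnn _).
rewrite add0n in hP.
have hPhi : Phi 0 L <= 3 / 2 * S.
  rewrite /Phi -/S.
  have -> : S = t 0 + \sum_(1 <= r < L) t r by rewrite /S big_ltn.
  have := t_gt0 Lpos.
  have : 0 <= \sum_(1 <= r < L) t r by apply: sum_t_ge0.
  move=> ? ?; lra.
have : sq * L%:R <= sq * (F * (4 * k%:R / lam)).
  apply: (le_trans hP).
  have h3 : sq + Phi 0 L <= sq * (1 + 3 * (k%:R / lam)).
    have : 3 / 2 * S <= sq * (3 * (k%:R / lam)).
      have -> : sq * (3 * (k%:R / lam)) = 3 / 2 * (2 * k%:R * sq / lam).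
        by field; rewrite gt_eqF.
      by apply: ler_wpM2l => //; lra.
    move=> ?; lra.
  have h4 : sq * (1 + 3 * (k%:R / lam)) <= sq * (4 * k%:R / lam).
    by apply: ler_wpM2l; [exact: ltW | rewrite mulrA in lk *; lra].
  rewrite mulrCA; apply: ler_wpM2l => //; exact: le_trans h3 h4.
by rewrite ler_pM2l.
Qed.

End Step.
Section Abstract.
Variables (R : realType) (m : nat).

Lemma extend_vec n (i0 : 'I_n.+2) (alpha : 'I_n.+2 -> 'rV[R]_m) (b' : 'rV[R]_n.+1) :
  let b : 'rV[R]_n.+2 := \row_i (if unlift i0 i is Some j then b' 0 j else 0) in
  dotv b b = dotv b' b' /\
  b *m rows_mx alpha = b' *m rows_mx (fun j => alpha (lift i0 j)).
Proof.
move=> b; split.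
  rewrite {1}/dotv (bigD1_ord i0) //= /b !mxE unlift_none mul0r add0r.
  by apply: eq_bigr => j _; rewrite !mxE liftK.
apply/rowP => c; rewrite !mxE (bigD1_ord i0) //= /b !mxE unlift_none mul0r add0r.
by apply: eq_bigr => j _; rewrite !mxE liftK.
Qed.

Definition seq_ok n (alpha : 'I_n -> 'rV[R]_m) L (v : nat -> 'rV[R]_m) (w : nat -> 'I_n) :=
  forall j, (j < L)%N ->
  dotv (v j) (alpha (w j)) < 0 /\ v j.+1 = reflect_at alpha (w j) (v j).

Lemma abstract_bound n : forall (alpha : 'I_n.+1 -> 'rV[R]_m) (lam : R),
  0 < lam -> (forall i, dotv (alpha i) (alpha i) = 1) ->
  (forall b : 'rV[R]_n.+1, lam * dotv b b <= dotv (b *m rows_mx alpha) (b *m rows_mx alpha)) ->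
  forall L v w, seq_ok alpha L v w ->
  (L%:R : R) <= (n.+1)`!%:R * (4 / lam) ^+ n.
Proof.
elim: n => [|n IH] alpha lam lam0 hunit hlam L v w hseq.
  rewrite expr0 mulr1 ler_nat leqNgt; apply/negP => hL.
  have [h0 e1] := hseq 0 (ltn_trans (ltnSn 0) hL).
  have [h1 _] := hseq 1 hL.
  move: h1; rewrite e1 /reflect_at (ord1 (w 1)) (ord1 (w 0)) dotvBl dotvZl hunit.
  rewrite (ord1 (w 0)) in h0; lra.
set F := ((n.+1)`!%:R * (4 / lam) ^+ n : R).
have F0 : 0 <= F.
  by rewrite /F mulr_ge0 ?ler0n // exprn_ge0 // divr_ge0 //; exact: ltW.
have := step_bound lam0 hunit hlam hseq (isT : (1 < n.+2)%N) F0.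
have -> : F * (4 * n.+2%:R / lam) = (n.+2)`!%:R * (4 / lam) ^+ n.+1.
  rewrite /F [(n.+2)`!]factS natrM exprS.
  ring.
apply => a l hal [i0 hi0].
pose alpha' := fun j => alpha (lift i0 j).
pose v' := fun j => v (a + j)%N.
pose w' := fun j => odflt ord0 (unlift i0 (w (a + j)%N)).
have hw' : forall j, (j < l)%N -> alpha' (w' j) = alpha (w (a + j)%N).
  move=> j hj; rewrite /alpha' /w'; case: unliftP => [k' -> //| heq].
  by move: (hi0 (a + j)%N); rewrite leq_addr ltn_add2l hj heq eqxx => /(_ isT).
apply: (IH alpha' lam lam0 _ _ l v' w').
- by move=> i; apply: hunit.
- move=> b'; have [e1 e2] := extend_vec i0 alpha b'.
  rewrite -e1 -e2; exact: hlam.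
- move=> j hj.
have hj' : (a + j < L)%N by apply: leq_trans hal; rewrite ltn_add2l.
have [h1 h2] := hseq _ hj'.
rewrite /v' addnS h2 /reflect_at hw' //; split => //.
Qed.

End Abstract.
Lemma gramE (R : realType) m n (alpha : 'I_n -> 'rV[R]_m) :
  gram alpha = rows_mx alpha *m (rows_mx alpha)^T.
Proof.
apply/matrixP => i j; rewrite !mxE /dotv; apply: eq_bigr => k _; by rewrite !mxE.
Qed.

Lemma traj_seq (R : realType) m n (alpha : 'I_n -> 'rV[R]_m) N x v w :
  billiard_traj alpha N x v w -> seq_ok alpha N v w.
Proof.
move=> [_ H] j hj; have [[t t0 [ex hint]] hw _ hv] := H j hj.
split => //.
have h2t : t / 2 < t by lra.
have h0t : 0 < t / 2 by lra.
have := hint (t / 2) h0t h2t => /(_ (w j)).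
move: hw; rewrite ex dotvDl dotvZl dotvDl dotvZl => h1 h2.
set c := dotv (v j) (alpha (w j)) in h1 h2 *.
set d := dotv (x j) (alpha (w j)) in h1 h2.
have : t / 2 * c < 0 by lra.
by rewrite pmulr_rlt0 // divr_gt0 //; lra.
Qed.

Theorem theorem1 (R : realType) (m n : nat) (alpha : 'I_n -> 'rV[R]_m)
  (hn1 : (1 <= n)%N) (hnm : (n <= m)%N)
  (hunit : forall i, dotv (alpha i) (alpha i) = 1)
  (hfree : row_free (rows_mx alpha))
  (lam : R) (hlam : eigenvalue (gram alpha) lam)
  (hlammin : forall mu : R, eigenvalue (gram alpha) mu -> lam <= mu) :
  forall (N : nat) (x v : nat -> 'rV[R]_m) (w : nat -> 'I_n),
    billiard_traj alpha N x v w ->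
    (N%:R <= (n`!)%:R * (4 / lam) ^+ (n.-1) :> R).
Proof.
move=> N x v w htraj.
have hseq := traj_seq htraj.
case: n alpha hn1 hnm hunit hfree lam hlam hlammin w htraj hseq => // n alpha _ _ hunit hfree
  lam hlam hlammin w _ hseq.
rewrite gramE in hlam hlammin.
set A := rows_mx alpha in hfree hlam hlammin.
have dG : forall b : 'rV[R]_n.+1, dotv (b *m (A *m A^T)) b = dotv (b *m A) (b *m A).
  by move=> b; rewrite mulmxA dotv_mull trmxK.
have lam0 : 0 < lam.
  move/eigenvalueP: hlam => [y hy y0].
  have := dG y; rewrite hy dotvZl => e.
  have yp : 0 < dotv y y by rewrite lt_def dotvv_eq0 y0 dotvv_ge0.
  have yAp : 0 < dotv (y *m A) (y *m A).
    by rewrite lt_def dotvv_eq0 mulmx_free_eq0 // y0 dotvv_ge0.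
  by move: yAp; rewrite -e pmulr_lgt0.
have hl : forall b : 'rV[R]_n.+1, lam * dotv b b <= dotv (b *m A) (b *m A).
  have sG : (A *m A^T)^T = A *m A^T by rewrite trmx_mul trmxK.
  have [mu [hmu hmub]] := rayleigh sG.
  move=> b; rewrite -dG; apply: le_trans (hmub b).
  by apply: ler_wpM2r; [exact: dotvv_ge0 | exact: hlammin].
exact: (abstract_bound lam0 hunit hl hseq).
Qed.
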